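(* For all $c\in[0,\overline{c}]$, $\lim_{x\to\infty}V(x,c)=\overline{c}/q$.
   Context: Cramér–Lundberg model: the uncontrolled surplus is $X_t=x+pt-\sum_{i=1}^{N_t}U_i$, where $x\ge0$ is the initial surplus, $p>0$ the premium rate, $N_t$ a Poisson process with intensity $\beta>0$, and the claims $U_i$ are i.i.d. positive random variables, independent of $N$, with continuous distribution function $F$; $p>\beta\mathbb{E}[U_1]$. Standing assumption (A1): $F$ is globally Lipschitz with constant $K>0$. Let $(\mathcal{F}_t)$ be the completed filtration generated by $X$. Fix $\overline{c}>0$ and $q>0$. $\Pi_{x,c,\overline{c}}$ is the set of càdlàg, adapted, non-decreasing processes $C$ with $c\le C_t\le\overline{c}$; $X^C_t=X_t-\int_0^tC_sds$ ($X_0=x$), $\tau=\inf\{t\ge0:X^C_t<0\}$, $J(x;C)=\mathbb{E}[\int_0^\tau e^{-qs}C_sds]$, $V(x,c)=\sup_{C\in\Pi_{x,c,\overline{c}}}J(x;C)$. Convention: only strategies are considered such that if $C_{t^-}=p$ and $X^C_t=0$ for some $t>0$ then $C_s=p$ for $s\ge t$ until ruin; the only strategy in $\Pi_{0,p,\overline{c}}$ is to pay at rate $p$ until the first claim. *)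

(* Defs.v *)
From HB Require Import structures.
From mathcomp Require Import all_boot all_order all_algebra.
From mathcomp Require Import all_classical all_reals all_analysis.
Set Implicit Arguments. Unset Strict Implicit. Unset Printing Implicit Defensive.
Import Order.TTheory GRing.Theory Num.Theory.
Import numFieldNormedType.Exports.
Local Open Scope classical_set_scope.
Local Open Scope ring_scope.

Definition mutually_independent {d} {Om : measurableType d} {R : realType}
  (P : probability Om R) {I : eqType} (Y : I -> Om -> R) : Prop :=
  forall (J : seq I) (B : I -> set R), uniq J ->
    (forall i, i \in J -> measurable (B i)) ->
    P (\big[setI/setT]_(i <- J) (Y i @^-1` B i)) =
    (\prod_(i <- J) P (Y i @^-1` B i))%E.

(* Arrival times S_n = W_0 + ... + W_{n-1} (S_0 = 0), W = interarrival times. *)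
Definition arrival {Om : Type} {R : realType} (W : nat -> Om -> R) (n : nat)
  (w : Om) : R := \sum_(i < n) W i w.

(* Poisson counting process N_t = #{n >= 1 : S_n <= t}
   = least n with S_{n+1} > t (0 on the null event where no such n exists). *)
Definition Ncount {Om : Type} {R : realType} (W : nat -> Om -> R) (t : R)
  (w : Om) : nat :=
  match pselect (exists n, `[< t < arrival W n.+1 w >]) with
  | left h => ex_minn h
  | right _ => 0%N
  end.

Definition surplus {Om : Type} {R : realType} (x p : R)
  (W U : nat -> Om -> R) (t : R) (w : Om) : R :=
  x + p * t - \sum_(i < Ncount W t w) U i w.

Definition completed {d} {Om : measurableType d} {R : realType}
  (P : probability Om R) (G : set (set Om)) (A : set Om) : Prop :=
  exists B, G B /\ P.-negligible ((A `\` B) `|` (B `\` A)).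

Definition filtrationX {d} {Om : measurableType d} {R : realType}
  (P : probability Om R) (X : R -> Om -> R) (t : R) : set (set Om) :=
  completed P (<<s \bigcup_(s in `[0, t]) preimage_set_system setT (X s) measurable >>).

Definition csurplus {d} {Om : measurableType d} {R : realType}
  (X : R -> Om -> R) (C : Om -> R -> R) (t : R) (w : Om) : R :=
  X t w - Rintegral (@lebesgue_measure R) `[0, t] (C w).

(* Ruin time tau = inf{t >= 0 : X^C_t < 0} (inf of empty set = +oo). *)
Definition ruin_time {d} {Om : measurableType d} {R : realType}
  (X : R -> Om -> R) (C : Om -> R -> R) (w : Om) : \bar R :=
  ereal_inf [set t%:E | t in [set t | 0 <= t /\ csurplus X C t w < 0]].

Definition left_lim {R : realType} (f : R -> R) (t : R) : R :=
  lim (f x @[x --> t^'-]).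

Definition admissible {d} {Om : measurableType d} {R : realType}
  (P : probability Om R) (x p : R) (W U : nat -> Om -> R) (c cbar : R)
  (C : Om -> R -> R) : Prop :=
  let X := surplus x p W U in
      (forall w t, 0 <= t -> C w s @[s --> t^'+] --> C w t) /\
      (forall w t, 0 < t -> cvg (C w s @[s --> t^'-])) /\
      (forall t B, 0 <= t -> measurable B ->
         filtrationX P X t [set w | B (C w t)]) /\
      (forall w s t, 0 <= s -> s <= t -> C w s <= C w t) /\
      (forall w t, 0 <= t -> c <= C w t <= cbar) /\
      (* convention: if C_{t-} = p and X^C_t = 0 (t > 0), pay p until ruin *)
      (forall w t, 0 < t -> left_lim (C w) t = p -> csurplus X C t w = 0 ->
         forall s, t <= s -> (s%:E < ruin_time X C w)%E -> C w s = p) /\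
      (* convention: the only strategy in Pi_{0,p,cbar} pays p until ruin
         (i.e. until the first claim) *)
      (x = 0 -> c = p -> forall w s, 0 <= s -> (s%:E < ruin_time X C w)%E ->
         C w s = p).

Definition Jvalue {d} {Om : measurableType d} {R : realType}
  (P : probability Om R) (x p q : R) (W U : nat -> Om -> R)
  (C : Om -> R -> R) : \bar R :=
  let X := surplus x p W U in
  (\int[P]_w (\int[@lebesgue_measure R]_(s in
      [set s : R | (0 <= s)%R /\ (s%:E < ruin_time X C w)%E])
      (expR (- (q * s)) * C w s)%:E))%E.

Definition Vvalue {d} {Om : measurableType d} {R : realType}
  (P : probability Om R) (p q cbar : R) (W U : nat -> Om -> R)
  (x c : R) : \bar R :=
  ereal_sup [set Jvalue P x p q W U C | C in admissible P x p W U c cbar].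

(* Main.v *)
Require Import Defs.
Set Warnings "-all".
From HB Require Import structures.
From mathcomp Require Import all_boot all_order all_algebra.
From mathcomp Require Import all_classical all_reals all_analysis.
From mathcomp Require Import ring lra.
Import Order.TTheory GRing.Theory Num.Theory.
Import numFieldNormedType.Exports.
Local Open Scope classical_set_scope.
Local Open Scope ring_scope.
Local Open Scope ereal_scope.
Lemma int_le (d : measure_display) (T : measurableType d) (R : realType)
  (mu : {measure set T -> \bar R}) (D1 D2 : set T) (f g : T -> \bar R) :
  (forall x, D1 x -> 0 <= f x) -> (forall x, D2 x -> 0 <= g x) ->
  (forall x, D1 x -> D2 x /\ f x <= g x) ->
  \int[mu]_(x in D1) f x <= \int[mu]_(x in D2) g x.
Proof.
move=> f0 g0 fg; rewrite (ge0_integralE _ f0) (ge0_integralE _ g0).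
apply: ereal_sup_le => _ [h hf <-]; exists h => // x.
apply: le_trans (hf x) _; rewrite /patch; case: ifPn => [|_].
  by rewrite inE => /fg [D2x fgx]; rewrite ifT ?inE.
by case: ifPn => [|_//]; rewrite inE => /g0.
Qed.
Local Close Scope ereal_scope.
Lemma inner_upper (R : realType) (q cbar : R) (D : set R) (h : R -> R) :
  0 < q -> 0 <= cbar ->
  (forall s, D s -> 0 <= s) -> (forall s, D s -> 0 <= h s <= cbar) ->
  (\int[@lebesgue_measure R]_(s in D) (expR (- (q * s)) * h s)%:E <= (cbar / q)%:E)%E.
Proof.
move=> q0 c0 D0 hD.
apply: (@le_trans _ _ (\int[@lebesgue_measure R]_(s in setT)
   ((cbar / q)%:E * (exponential_pdf q s)%:E))%E).
  apply: int_le.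
  - move=> s Ds; rewrite lee_fin mulr_ge0 ?expR_ge0//.
    by case/andP: (hD s Ds).
  - by move=> s _; rewrite -EFinM lee_fin; apply: mulr_ge0; [rewrite divr_ge0 // ltW | exact: (exponential_pdf_ge0 (ltW q0) _)].
  - move=> s Ds; split => //; rewrite -EFinM lee_fin (exponential_pdfE _ (D0 _ Ds)).
    rewrite mulrA divfK ?gt_eqF// mulNr.
    by rewrite [X in _ <= X]mulrC; apply: ler_wpM2l; [exact: expR_ge0| case/andP: (hD s Ds)].
rewrite (@ge0_integralZl_EFin _ _ _ (@lebesgue_measure R) _ measurableT (fun s => (exponential_pdf q s)%:E)).
- by rewrite integral_exponential_pdf// mule1.
- by move=> s _; rewrite lee_fin; exact: (exponential_pdf_ge0 (ltW q0) _).
- by apply/measurable_realfun.measurable_EFinP; exact: measurable_exponential_pdf.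
- by rewrite divr_ge0// ltW.
Qed.

Lemma inner_lower (R : realType) (q cbar T : R) (D : set R) :
  0 < q -> 0 <= cbar -> 0 < T -> `[0, T] `<=` D ->
  ((cbar / q * (1 - expR (- (q * T))))%:E <=
   \int[@lebesgue_measure R]_(s in D) (expR (- (q * s)) * cbar)%:E)%E.
Proof.
move=> q0 c0 T0 TD.
have H : (\int[@lebesgue_measure R]_(s in `[0%R, T]) ((cbar / q)%:E * (exponential_pdf q s)%:E))%E = (cbar / q * (1 - expR (- (q * T))))%:E.
  rewrite (@ge0_integralZl_EFin _ _ _ (@lebesgue_measure R) _ (measurable_itv `[0, T]) (fun s => (exponential_pdf q s)%:E)).
  - have := exponential_prob_itv0c q T0; rewrite /exponential_prob => ->.
    by rewrite EFinM -EFinB mulNr.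
  - by move=> s _; rewrite lee_fin; exact: (exponential_pdf_ge0 (ltW q0) _).
  - by apply/measurable_realfun.measurable_EFinP; apply: measurable_funTS; exact: measurable_exponential_pdf.
  - by rewrite divr_ge0// ltW.
rewrite -H; apply: int_le.
- by move=> s _; rewrite -EFinM lee_fin; apply: mulr_ge0; [rewrite divr_ge0 // ltW | exact: (exponential_pdf_ge0 (ltW q0) _)].
- by move=> s Ds; rewrite lee_fin mulr_ge0 ?expR_ge0.
- move=> s Ds; split; first exact: TD.
  have s0 : 0 <= s by move: Ds; rewrite /= in_itv/= => /andP[].
  rewrite -EFinM lee_fin (exponential_pdfE _ s0).
  by rewrite mulrA divfK ?gt_eqF// mulNr mulrC.
Qed.
Lemma cst_adm (R : realType) (d : measure_display)
  (Om : measurableType d) (P : probability Om R) (x p c cbar : R)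
  (W U : nat -> Om -> R) :
  0 < x -> c <= cbar -> admissible P x p W U c cbar (fun _ _ => cbar).
Proof.
move=> x0 ccb; rewrite /admissible; split; [|split; [|split; [|split; [|split; [|split]]]]].
- by move=> w t _; exact: cvg_cst.
- by move=> w t _; exact: is_cvg_cst.
- move=> t B _ _; rewrite /filtrationX /completed.
  exists [set w | B cbar]; split; last first.
    by rewrite setDv setU0; exact: negligible_set0.
  have [sa0 saC _] := @smallest_sigma_algebra Om setT
    (\bigcup_(s in `[0, t]) preimage_set_system setT (surplus x p W U s) measurable).
  have [Bc|nBc] := pselect (B cbar).
    suff -> : [set w | B cbar] = setT :> set Om by have := saC set0 sa0; rewrite setD0.
    by apply/seteqP; split => // w.
  suff -> : [set w | B cbar] = set0 :> set Om by [].
  by apply/seteqP; split => // w.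
- by [].
- by move=> w t _; rewrite ccb lexx.
- move=> w t _; rewrite /left_lim. have -> : lim (cbar @[_ --> t^'-]) = cbar by apply: lim_cst. by move=> cp _ s0 _ _.

- by move=> x00; rewrite x00 ltxx in x0.
Qed.
Definition Sset {Om : Type} {R : realType} (Z : nat -> Om -> R) (b : R) (k m : nat) : set Om :=
  \big[setI/setT]_(i <- iota k m) (Z i @^-1` `]-oo, b]).

Lemma SsetP {Om : Type} {R : realType} (Z : nat -> Om -> R) b k m w :
  Sset Z b k m w <-> (forall i, (k <= i < k + m)%N -> Z i w <= b).
Proof.
rewrite /Sset; elim: m k => [|m IH] k /=.
  rewrite big_nil; split => // _ i; rewrite addn0 => /andP[ki ik].
  by have := leq_ltn_trans ki ik; rewrite ltnn.
rewrite big_cons; split.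
  move=> [Zk /IH H] i /andP[ki ikm].
  have [->|nik] := eqVneq i k; first by move: Zk; rewrite /= in_itv.
  apply: H; rewrite addSnnS ikm andbT ltn_neqAle ki eq_sym nik //.
move=> H; split.
  by rewrite /= in_itv /=; apply: H; rewrite leqnn /= addnS ltnS leq_addr.
apply/IH => i /andP[ki ikm]; apply: H; rewrite (ltnW ki) /=.
by rewrite -addSnnS.
Qed.

Lemma Sset_meas {d} {Om : measurableType d} {R : realType} (Z : nat -> Om -> R) b k m :
  (forall n, measurable_fun setT (Z n)) -> measurable (Sset Z b k m).
Proof.
move=> mZ; rewrite /Sset; elim: m k => [|m IH] k /=.
  by rewrite big_nil.
rewrite big_cons; apply: measurableI => //.
rewrite -[_ @^-1` _]setTI; apply: mZ => //.
Qed.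

Lemma prodE_cst {R : realType} (r : R) (s : seq nat) :
  (\prod_(i <- s) r%:E)%E = (r ^+ size s)%:E.
Proof.
elim: s => [|a s IH]; first by rewrite big_nil.
by rewrite big_cons IH /= exprS EFinM.
Qed.

Lemma prob_SW (R : realType) (d : measure_display)
  (Om : measurableType d) (P : probability Om R) (beta T : R) (W U : nat -> Om -> R) (m : nat) :
  0 <= T ->
  (forall n, measurable_fun setT (W n)) ->
  (forall n t, 0 <= t -> P [set w | W n w <= t] = (1 - expR (- (beta * t)))%:E) ->
  mutually_independent P (fun i : nat + nat =>
    match i with inl n => W n | inr n => U n end) ->
  P (Sset W T 0 m) = ((1 - expR (- (beta * T))) ^+ m)%:E.
Proof.
move=> T0 mW cdf ind.
have := ind (map inl (iota 0 m)) (fun _ => `]-oo, T]%classic).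
rewrite map_inj_uniq ?iota_uniq; last by move=> a b [].
move=> /(_ isT (fun _ _ => measurable_itv _)).
rewrite !big_map /= => ->.
rewrite (eq_bigr (fun _ => (1 - expR (- (beta * T)))%:E)).
  by rewrite prodE_cst size_iota.
move=> i _; rewrite -(cdf i T T0); congr (P _).
Qed.

Lemma sum_prefix {R : realType} (f : nat -> R) (N m : nat) :
  (forall i, 0 <= f i) -> (N <= m)%N -> \sum_(i < N) f i <= \sum_(i < m) f i.
Proof.
move=> f0 Nm; rewrite -(subnKC Nm) big_split_ord /= lerDl.
by apply: sumr_ge0 => i _.
Qed.

Lemma cs_cst {d} {Om : measurableType d} {R : realType} (x p cbar t : R) (W U : nat -> Om -> R) w :
  0 <= t -> csurplus (surplus x p W U) (fun _ _ => cbar) t w =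
    x + p * t - \sum_(i < Ncount W t w) U i w - cbar * t.
Proof.
move=> t0; rewrite /csurplus Rintegral_cst //= lebesgue_measure_itv /=.
rewrite /surplus; case: ifPn => [_|]; first by rewrite oppr0 adde0.
rewrite lte_fin -leNgt => t0'; have tE : t = 0 by apply/eqP; rewrite eq_le t0' t0.
by rewrite tE !mulr0.
Qed.

Lemma Ncount_le {Om : Type} {R : realType} (W : nat -> Om -> R) t w n :
  t < arrival W n.+1 w -> (Ncount W t w <= n)%N.
Proof.
rewrite /Ncount; case: pselect => [h|nh] tn //.
by case: ex_minnP => N _ Hmin; apply: Hmin; exact/asboolP.
Qed.

Lemma ruin_ge {d} {Om : measurableType d} {R : realType} (x p cbar T k : R) (m : nat)
  (W U : nat -> Om -> R) w :
  0 <= p -> 0 <= cbar -> (forall n, 0 < W n w) -> (forall n, 0 < U n w) ->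
  ~ Sset W T 0 m w -> Sset U k 0 m w -> 0 <= T -> m%:R * k + cbar * T <= x ->
  (T%:E <= ruin_time (surplus x p W U) (fun _ _ => cbar) w)%E.
Proof.
move=> p0 c0 W0 U0 nSW SU T0 xbig.
have [i im Wi] : exists2 i, (i < m)%N & T < W i w.
  move: nSW; apply: contra_notP => H; apply/SsetP => i /andP[_ im].
  rewrite leNgt; apply/negP => Wi; apply: H; exists i => //.
have key : forall t, 0 <= t -> t <= T ->
    0 <= csurplus (surplus x p W U) (fun _ _ => cbar) t w.
  move=> t t0 tT; rewrite cs_cst //.
  have hN : (Ncount W t w <= m)%N.
    case: m im {xbig SU nSW} => // m im; apply: leqW; apply: Ncount_le.
    rewrite /arrival; apply: (lt_le_trans _ (@sum_prefix R (fun j => W j w) i.+1 m.+1 (fun j => ltW (W0 j)) im)).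
    by rewrite big_ord_recr /=; apply: (le_lt_trans tT); apply: (lt_le_trans Wi); rewrite lerDr; apply: sumr_ge0 => j _; exact: ltW.
  have hS : \sum_(i < Ncount W t w) U i w <= m%:R * k.
    apply: (le_trans (@sum_prefix R (fun j => U j w) _ _ (fun j => ltW (U0 j)) hN)).
    have -> : m%:R * k = \sum_(j < m) k by rewrite sumr_const card_ord mulr_natl.
    by apply: ler_sum => j _; apply: (iffLR (SsetP _ _ _ _ _) SU); rewrite add0n ltn_ord.
  have : 0 <= p * t by rewrite mulr_ge0.
  have : cbar * t <= cbar * T by apply: ler_wpM2l.
  lra.
apply: le_ereal_inf_tmp => _ [t [t0 neg] <-]; rewrite lee_fin leNgt; apply/negP => tT.
by have := key t t0 (ltW tT); rewrite leNgt neg.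
Qed.

Lemma J_upper (R : realType) (d : measure_display)
  (Om : measurableType d) (P : probability Om R) (x p q c cbar : R)
  (W U : nat -> Om -> R) (C : Om -> R -> R) :
  0 < q -> 0 <= c -> 0 <= cbar -> admissible P x p W U c cbar C ->
  (Jvalue P x p q W U C <= (cbar / q)%:E)%E.
Proof.
move=> q0 c0 cb0 [_ [_ [_ [_ [hb _]]]]].
rewrite /Jvalue.
apply: (@le_trans _ _ (\int[P]_(w in setT) (cst (cbar / q)%:E w))%E).
  apply: int_le.
  - move=> w _; apply: integral_ge0 => s [s0 _].
    by rewrite lee_fin mulr_ge0 ?expR_ge0 //; case/andP: (hb w s s0) => cs _; exact: le_trans cs.
  - by move=> w _; rewrite /= lee_fin divr_ge0 // ltW.
  - move=> w _; split => //; apply: inner_upper => //.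
    + by move=> s [].
    + move=> s [s0 _]; case/andP: (hb w s s0) => cs ->; rewrite andbT.
      exact: le_trans cs.
rewrite integral_cst // -[X in (_ <= X)%E]mule1; apply: lee_wpmul2l; [by rewrite lee_fin divr_ge0 // ltW | exact: probability_le1].
Qed.

Lemma J_lower (R : realType) (d : measure_display)
  (Om : measurableType d) (P : probability Om R) (x p q cbar T k : R) (m : nat)
  (W U : nat -> Om -> R) :
  0 < q -> 0 <= p -> 0 <= cbar -> 0 < T ->
  (forall n, measurable_fun setT (W n)) -> (forall n, measurable_fun setT (U n)) ->
  (forall n w, 0 < W n w) -> (forall n w, 0 < U n w) ->
  m%:R * k + cbar * (T + 1) <= x ->
  ((cbar / q * (1 - expR (- (q * T))))%:E * P (Sset U k 0 m `\` Sset W (T + 1) 0 m)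
    <= Jvalue P x p q W U (fun _ _ => cbar))%E.
Proof.
move=> q0 p0 cb0 T0 mW mU W0 U0 xbig.
set E := Sset U k 0 m `\` Sset W (T + 1) 0 m.
have mE : measurable E by apply: measurableD; exact: Sset_meas.
have a0 : 0 <= cbar / q * (1 - expR (- (q * T))).
  apply: mulr_ge0; first by rewrite divr_ge0 // ltW.
  by rewrite subr_ge0 expR_le1 oppr_le0; apply: mulr_ge0; exact: ltW.
have -> : ((cbar / q * (1 - expR (- (q * T))))%:E * P E =
    \int[P]_(w in setT) ((cbar / q * (1 - expR (- (q * T))))%:E * (\1_E w)%:E))%E.
  rewrite (@ge0_integralZl_EFin _ _ _ P _ measurableT (fun w => (\1_E w)%:E)); last exact: a0.
  - by rewrite integral_indic // setIT.
  - by move=> w _; rewrite lee_fin.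
  - by apply/measurable_realfun.measurable_EFinP; exact: measurable_realfun.measurable_indic.
rewrite /Jvalue; apply: int_le.
- by move=> w _; rewrite -EFinM lee_fin mulr_ge0.
- move=> w _; apply: integral_ge0 => s [s0 _].
  by rewrite lee_fin mulr_ge0 ?expR_ge0.
move=> w _; split => //; rewrite /indic.
have [wE|wE] := boolP (w \in E); last first.
  rewrite -EFinM mulr0; apply: integral_ge0 => s [s0 _].
  by rewrite lee_fin mulr_ge0 ?expR_ge0.
rewrite -EFinM mulr1; apply: inner_lower => // s /=; rewrite in_itv /= => /andP[s0 sT].
split => //.
move: wE; rewrite inE => -[SU nSW].
have T10 : 0 <= T + 1 by lra.
have H := @ruin_ge _ _ _ x p cbar (T+1) k m W U w p0 cb0 (W0^~ w) (U0^~ w) nSW SU T10 xbig.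
by apply: lt_le_trans H; rewrite lte_fin; lra.
Unshelve. all: end_near.
Qed.

Lemma term_le_sum {R : realType} (f : nat -> R) (i m : nat) :
  (forall j, 0 <= f j) -> (i < m)%N -> f i <= \sum_(j < m) f j.
Proof.
move=> f0 im; apply: (le_trans _ (@sum_prefix R f i.+1 m f0 im)).
by rewrite big_ord_recr /= lerDr; apply: sumr_ge0.
Qed.

Lemma choose_k (R : realType) (d : measure_display)
  (Om : measurableType d) (P : probability Om R) (U : nat -> Om -> R) (m : nat) (dl : R) :
  (forall n, measurable_fun setT (U n)) -> (forall n w, 0 < U n w) -> 0 < dl ->
  exists k : nat, ((1 - dl)%:E <= P (Sset U k%:R 0 m))%E.
Proof.
move=> mU U0 dl0.
pose B := fun k : nat => Sset U k%:R 0 m.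
have mB k : measurable (B k) by exact: Sset_meas.
have ndB : {homo B : a b / (a <= b)%N >-> (a <= b)%O}.
  move=> a b ab; apply/subsetPset => w /SsetP H; apply/SsetP => i im.
  by apply: le_trans (H i im) _; rewrite ler_nat.
have UB : \bigcup_n B n = setT.
  apply/seteqP; split => // w _.
  exists (Num.Def.archi_bound (\sum_(i < m) U i w)) => //.
  apply/SsetP => i /andP[_ im]; rewrite add0n in im.
  apply: le_trans (ltW (archi_boundP _)).
    by apply: (@term_le_sum R (fun j => U j w)) => // j; exact: ltW.
  by apply: sumr_ge0 => j _; exact: ltW.
have mUB : measurable (\bigcup_n B n) by rewrite UB.
have h0 := @nondecreasing_cvg_mu _ _ _ P B mB mUB ndB; rewrite UB in h0.
have : (P \o B) x @[x --> \oo] --> 1%E by rewrite -(probability_setT P); exact: h0.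
move/fine_cvgP => [_ /cvgrPdist_lt /(_ dl dl0) [N _ HN]].
exists N; have := HN N (leqnn N); rewrite /= => H.
rewrite -(@fineK _ (P (B N))); last exact: fin_num_measure.
rewrite lee_fin; move: H; rewrite ltr_norml; lra.
Unshelve. all: end_near.
Qed.

Lemma choose_m (R : realType) (r dl : R) :
  0 <= r -> r < 1 -> 0 < dl -> exists m : nat, r ^+ m <= dl.
Proof.
move=> r0 r1 dl0.
have : `|r| < 1 by rewrite ger0_norm.
move/cvg_expr/cvgrPdist_lt/(_ dl dl0) => [N _ HN].
exists N; have := HN N (leqnn N); rewrite /= sub0r normrN ger0_norm ?exprn_ge0 //.
exact: ltW.
Qed.

Lemma PE_lower (R : realType) (d : measure_display)
  (Om : measurableType d) (P : probability Om R) (A B : set Om) (a b : R) :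
  measurable A -> measurable B -> (a%:E <= P A)%E -> (P B <= b%:E)%E ->
  ((a - b)%:E <= P (A `\` B))%E.
Proof.
move=> mA mB ha hb.
have hD := measureDI P mA mB.
have hI : (P (A `&` B) <= P B)%E.
  apply: le_measure; rewrite ?inE //; try exact: measurableI; exact: subIsetr.
rewrite EFinB leeBlDr //; apply: le_trans ha _; rewrite hD; apply: leeD2l.
exact: le_trans hI hb.
Qed.

Theorem proposition4p5 (R : realType) (d : measure_display)
  (Om : measurableType d) (P : probability Om R)
  (p beta q cbar : R) (F : R -> R)
  (W U : nat -> Om -> R) :
  0 < p -> 0 < beta -> 0 < q -> 0 < cbar ->
  (* interarrival times: i.i.d. Exp(beta), positive *)
  (forall n, measurable_fun setT (W n)) ->
  (forall n w, 0 < W n w) ->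
  (forall n t, 0 <= t -> P [set w | W n w <= t] = (1 - expR (- (beta * t)))%:E) ->
  (* claims: i.i.d. with continuous distribution function F, positive *)
  (forall n, measurable_fun setT (U n)) ->
  (forall n w, 0 < U n w) ->
  (forall n t, P [set w | U n w <= t] = (F t)%:E) ->
  continuous F ->
  (* (A1): F globally Lipschitz with constant K > 0 *)
  (exists2 K : R, 0 < K & forall a b, `|F a - F b| <= K * `|a - b|) ->
  (* all interarrival times and claims mutually independent *)
  mutually_independent P (fun i : nat + nat =>
    match i with inl n => W n | inr n => U n end) ->
  (* net profit condition p > beta E[U_1] *)
  (beta%:E * (\int[P]_w (U 0%N w)%:E) < p%:E)%E ->
  forall c, 0 <= c <= cbar ->
    Vvalue P p q cbar W U x c @[x --> +oo] --> (cbar / q)%:E.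
Proof.
move=> p0 b0 q0 cb0 mW W0 cdfW mU U0 cdfU _ _ ind _ c /andP[c0 ccb].
have Vup x : (Vvalue P p q cbar W U x c <= (cbar / q)%:E)%E.
  apply: ge_ereal_sup => _ [C hC <-].
  exact: (@J_upper R d Om P x p q c cbar W U C q0 c0 (ltW cb0) hC).
have Vlow x : 0 < x ->
    (Jvalue P x p q W U (fun _ _ => cbar) <= Vvalue P p q cbar W U x c)%E.
  move=> x0; apply: ereal_sup_ubound; exists (fun _ _ => cbar) => //.
  exact: cst_adm.
have J0 x : (0 <= Jvalue P x p q W U (fun _ _ => cbar))%E.
  apply: integral_ge0 => w _; apply: integral_ge0 => s [s0 _].
  by rewrite lee_fin mulr_ge0 ?expR_ge0 // ltW.
apply/fine_cvgP; split.
  near=> x.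
  have x0 : 0 < x by near: x; apply: nbhs_pinfty_gt; exact: num_real.
  rewrite ge0_fin_numE; first by apply: le_lt_trans (Vup x) _; exact: ltry.
  exact: le_trans (J0 x) (Vlow x x0).
apply/cvgrPdist_le => eps eps0.
pose T := 2 * cbar / (q * q * eps).
have T0 : 0 < T by rewrite /T divr_gt0 ?mulr_gt0.
have eT : cbar / q * expR (- (q * T)) <= eps / 2.
  rewrite expRN -/(_ / _) ler_pdivrMr ?expR_gt0 //.
  apply: (@le_trans _ _ (eps / 2 * (q * T))).
    rewrite le_eqVlt; apply/orP; left; apply/eqP; rewrite /T; field.
    by rewrite !gt_eqF.
  apply: ler_wpM2l; first by rewrite divr_ge0 // ltW.
  have := expR_ge1Dx (q * T); lra.
pose dl := eps * q / (4 * cbar).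
have dl0 : 0 < dl by rewrite /dl divr_gt0 ?mulr_gt0.
have Ldl : cbar / q * dl = eps / 4.
  by rewrite /dl; field; rewrite !gt_eqF.
pose r := 1 - expR (- (beta * (T + 1))).
have r0 : 0 <= r.
  by rewrite /r subr_ge0 expR_le1 oppr_le0 mulr_ge0 // ltW // ltr_pwDl // ltW.
have r1 : r < 1.
  by rewrite /r ltrBlDr ltrDl expR_gt0.
have [m rm] := @choose_m R r dl r0 r1 dl0.
have [k Pk] := @choose_k R d Om P U m dl mU U0 dl0.
near=> x.
have x0 : 0 < x by near: x; apply: nbhs_pinfty_gt; exact: num_real.
have xbig : m%:R * k%:R + cbar * (T + 1) <= x.
  by near: x; apply: nbhs_pinfty_ge; exact: num_real.
have HJ := @J_lower R d Om P x p q cbar T k%:R m W U q0 (ltW p0) (ltW cb0) T0 mW mU W0 U0 xbig.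
have T10 : 0 <= T + 1 by lra.
have PSW := @prob_SW R d Om P beta (T + 1) W U m T10 mW cdfW ind.
have hSW : (P (Sset W (T + 1) 0 m) <= dl%:E)%E by rewrite PSW lee_fin.
have PE := @PE_lower R d Om P _ _ (1 - dl) dl (Sset_meas U k%:R 0 m mU) (Sset_meas W (T + 1) 0 m mW) Pk hSW.
set A := cbar / q * (1 - expR (- (q * T))) in HJ.
have L0 : 0 <= cbar / q by rewrite divr_ge0 // ltW.
have e1 : 1 - expR (- (q * T)) <= 1 by rewrite lerBlDr lerDl expR_ge0.
have A0 : 0 <= A.
  by rewrite /A mulr_ge0 // subr_ge0 expR_le1 oppr_le0 mulr_ge0 // ltW.
have AL : A <= cbar / q by rewrite /A -[X in _ <= X]mulr1 ler_wpM2l.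
have hA : A = cbar / q - cbar / q * expR (- (q * T)) by rewrite /A mulrBr mulr1.
have HJ2 : ((A * (1 - dl - dl))%:E <= Jvalue P x p q W U (fun _ _ => cbar))%E.
  rewrite EFinM; apply: le_trans HJ; apply: lee_wpmul2l => //; rewrite lee_fin.
have V1 := le_trans HJ2 (Vlow x x0).
have V2 := Vup x.
have Vfin : Vvalue P p q cbar W U x c \is a fin_num.
  rewrite ge0_fin_numE; first by apply: le_lt_trans (Vup x) _; exact: ltry.
  exact: le_trans (J0 x) (Vlow x x0).
move: V1 V2; rewrite -(fineK Vfin) !lee_fin => V1 V2 /=.
have hAd : A * dl <= cbar / q * dl by rewrite ler_wpM2r // ltW.
rewrite ger0_norm; last by rewrite subr_ge0.
have : A * (1 - dl - dl) = A - 2 * (A * dl) by ring.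
lra.
Unshelve. all: end_near.
Qed.
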